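(* Let $k$ be a field and $Q,q\in k^\times$, $d\ge1$, and suppose $\mathcal H^B_{Q,q}(d)$ is semisimple. Then $V_{2d}$ generates $V_{2d+1}$; that is, the $\mathcal H^B_{Q,q}(d)$-module $V_{2d+1}^{\otimes d}$ is isomorphic to a direct summand of a finite direct sum of copies of $V_{2d}^{\otimes d}$.
   Context: $\mathcal H^B_{Q,q}(d)$ is the algebra generated by $T_0,\dots,T_{d-1}$ with relations $(T_0+Q)(T_0-Q^{-1})=0$; $(T_i+q)(T_i-q^{-1})=0$ ($i>0$); $T_iT_{i+1}T_i=T_{i+1}T_iT_{i+1}$ ($i>0$); $T_0T_1T_0T_1=T_1T_0T_1T_0$; $T_iT_j=T_jT_i$ ($|i-j|>1$). For $N=2s$ let $\mathbb I_N=\{-\tfrac{2s-1}{2},\dots,-\tfrac12,\tfrac12,\dots,\tfrac{2s-1}{2}\}$ and for $N=2s+1$ let $\mathbb I_N=\{-s,\dots,s\}$; $V_N$ has basis $\{v_i:i\in\mathbb I_N\}$. $R_q(v_i\otimes v_j)=q^{-1}v_i\otimes v_j$ if $i=j$, $v_j\otimes v_i$ if $i<j$, $v_j\otimes v_i+(q^{-1}-q)v_i\otimes v_j$ if $i>j$; $K_Q(v_i)=Q^{-1}v_i$ if $i=0$, $v_{-i}$ if $i>0$, $v_{-i}+(Q^{-1}-Q)v_i$ if $i<0$. The algebra acts on $V_N^{\otimes d}$ from the right: $T_i$ ($i>0$) by $R_q$ on factors $i,i+1$, $T_0$ by $K_Q$ on the first factor. *)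

(* Defs.v *)
From HB Require Import structures.
From mathcomp Require Import all_boot all_order all_algebra.
Set Implicit Arguments. Unset Strict Implicit. Unset Printing Implicit Defensive.
Import Order.TTheory GRing.Theory Num.Theory.
Local Open Scope ring_scope.

(* Representations of H^B_{Q,q}(d) on k^n (row vectors, RIGHT action:     *)
(* v . T_i := v *m T i).  Generator T_i, i = 0..d-1, is indexed by 'I_d.  *)
(* A right H-module structure on k^n is exactly a family of matrices     *)
(* satisfying the defining relations (v.(ab) = (v.a).b = v *m A *m B).    *)
Definition is_HB_rep (k : fieldType) (Q q : k) (d n : nat)
    (T : 'I_d -> 'M[k]_n) : Prop :=
  [/\ (forall i : 'I_d, val i = 0%N ->
         (T i + Q%:M) *m (T i - Q^-1%:M) = 0),
      (forall i : 'I_d, (0 < val i)%N ->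
         (T i + q%:M) *m (T i - q^-1%:M) = 0),
      (forall i j : 'I_d, (0 < val i)%N -> val j = (val i).+1 ->
         T i *m T j *m T i = T j *m T i *m T j),
      (forall i j : 'I_d, val i = 0%N -> val j = 1%N ->
         T i *m T j *m T i *m T j = T j *m T i *m T j *m T i) &
      (forall i j : 'I_d, ((val i).+1 < val j)%N || ((val j).+1 < val i)%N ->
         T i *m T j = T j *m T i)].

Definition completely_reducible (k : fieldType) (d n : nat)
    (T : 'I_d -> 'M[k]_n) : Prop :=
  forall U : 'M[k]_n, (forall i, (U *m T i <= U)%MS) ->
  exists W : 'M[k]_n, (forall i, (W *m T i <= W)%MS) /\
    (U :&: W <= (0 : 'M[k]_n))%MS /\ (1%:M <= U + W)%MS.

(* H^B_{Q,q}(d) is semisimple: every (finite-dimensional) H-module is     *)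
(* semisimple.  (H is finite dimensional, so this is equivalent to the   *)
(* semisimplicity of the regular module.)                   *)
Definition HB_semisimple (k : fieldType) (Q q : k) (d : nat) : Prop :=
  forall (n : nat) (T : 'I_d -> 'M[k]_n), is_HB_rep Q q T ->
    completely_reducible T.

(* I_N is identified with 'I_N via a |-> a - (N-1)/2, so:                 *)
(*   order is preserved, index 0  <->  2a+1 = N,  index > 0 <-> 2a+1 > N, *)
(*   index -i  <->  rev_ord a.                                            *)
(* Basis of V_N^{(x)d}: functions u : 'I_d -> 'I_N (u p = index of the    *)
(* (p+1)-th tensor factor), i.e. v_{u 0} (x) ... (x) v_{u (d-1)}.         *)
Definition tbasis (d N : nat) := {ffun 'I_d -> 'I_N}.
Definition tdim (d N : nat) : nat := #|{: tbasis d N}|.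

Section TensorOps.
Variables (k : fieldType) (d N : nat).

Definition prev_ord (i : 'I_d) : 'I_d :=
  Ordinal (leq_ltn_trans (leq_pred i) (ltn_ord i)).

Definition swap_at (i : 'I_d) (u : tbasis d N) : tbasis d N :=
  [ffun p => if p == prev_ord i then u i
             else if p == i then u (prev_ord i) else u p].

Definition set_first (p0 : 'I_d) (a : 'I_N) (u : tbasis d N) : tbasis d N :=
  [ffun p => if p == p0 then a else u p].

(* coefficient of basis vector w in R_q applied to factors i-1, i of u    *)
Definition R_coef (q : k) (i : 'I_d) (u w : tbasis d N) : k :=
  let a := u (prev_ord i) in let b := u i in
  if a == b then (if w == u then q^-1 else 0)
  else if (a < b)%N then (if w == swap_at i u then 1 else 0)
  else (if w == swap_at i u then 1 else 0) + (if w == u then q^-1 - q else 0).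

(* coefficient of basis vector w in K_Q applied to the first factor of u
   (p0 is the position 0) *)
Definition K_coef (Q : k) (p0 : 'I_d) (u w : tbasis d N) : k :=
  let a := u p0 in
  if (a.*2.+1 == N)%N then (if w == u then Q^-1 else 0)
  else if (N < a.*2.+1)%N then (if w == set_first p0 (rev_ord a) u then 1 else 0)
  else (if w == set_first p0 (rev_ord a) u then 1 else 0)
       + (if w == u then Q^-1 - Q else 0).

Definition T_coef (Q q : k) (i : 'I_d) (u w : tbasis d N) : k :=
  if val i == 0%N then K_coef Q i u w else R_coef q i u w.

(* Matrix of T_i on V_N^{(x)d} (row = input basis vector, right action). *)
Definition T_mx (Q q : k) (i : 'I_d) : 'M[k]_(tdim d N) :=
  \matrix_(x, y) T_coef Q q i (enum_val x) (enum_val y).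

End TensorOps.

Definition intertwines (k : fieldType) (d n1 n2 : nat)
    (T1 : 'I_d -> 'M[k]_n1) (T2 : 'I_d -> 'M[k]_n2) (F : 'M[k]_(n1, n2)) : Prop :=
  forall i, T1 i *m F = F *m T2 i.

Definition rep_dsum (k : fieldType) (d n m : nat) (T : 'I_d -> 'M[k]_n)
    (i : 'I_d) : 'M[k]_(\sum_(j < m) n) :=
  \mxdiag_(j < m) T i.

(* Main.v *)
Require Import Defs.
From mathcomp Require Import all_boot all_order all_algebra.
From mathcomp Require Import ring lra zify.
Set Implicit Arguments. Unset Strict Implicit. Unset Printing Implicit Defensive.
Import Order.TTheory GRing.Theory Num.Theory.
Local Open Scope ring_scope.

Ltac decide_nat :=
  repeat match goal with
  | |- context [(?x <= ?y)%N] =>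
      let H := fresh in
      first [ have H : (x <= y)%N = true by apply/idP; lia
            | have H : (x <= y)%N = false by apply/negbTE/negP; lia ];
      rewrite H; clear H
  | |- context [(?x == ?y :> nat)] =>
      let H := fresh in
      first [ have H : (x == y :> nat) = true by apply/eqP; lia
            | have H : (x == y :> nat) = false by apply/negbTE/eqP; lia ];
      rewrite H; clear H
  end.

Section Loc.
Variables (k : fieldType) (N : nat) (Q q : k).
Hypotheses (hQ : Q != 0) (hq : q != 0).
Definition aR (x y : 'I_N) : k := (nat_of_ord x != nat_of_ord y)%:R.
Definition bR (x y : 'I_N) : k :=
  if nat_of_ord x == nat_of_ord y then q^-1 else if (x < y)%N then 0 else q^-1 - q.
Definition aK (x : 'I_N) : k := ((nat_of_ord x).*2.+1 != N)%:R.
Definition bK (x : 'I_N) : k :=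
  if (nat_of_ord x).*2.+1 == N then Q^-1 else if (N < (nat_of_ord x).*2.+1)%N then 0 else Q^-1 - Q.

Definition R12 (F : 'I_N -> 'I_N -> 'I_N -> k) x y z := aR x y * F y x z + bR x y * F x y z.
Definition R23 (F : 'I_N -> 'I_N -> 'I_N -> k) x y z := aR y z * F x z y + bR y z * F x y z.

Lemma braid_loc F a b c : R12 (R23 (R12 F)) a b c = R23 (R12 (R23 F)) a b c.
Proof.
rewrite /R12 /R23 /aR /bR.
case: (ltngtP a b) => [h1|h1|/val_inj h1]; case: (ltngtP b c) => [h2|h2|/val_inj h2];
  case: (ltngtP a c) => [h3|h3|/val_inj h3]; subst; decide_nat; rewrite /=; try lia; field.
all: exact hq.
Qed.

Definition K1 (F : 'I_N -> 'I_N -> k) x y := aK x * F (rev_ord x) y + bK x * F x y.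
Definition R2 (F : 'I_N -> 'I_N -> k) x y := aR x y * F y x + bR x y * F x y.

Lemma typeB_loc F a b : K1 (R2 (K1 (R2 F))) a b = R2 (K1 (R2 (K1 F))) a b.
Proof.
rewrite /K1 /R2 /aR /bR /aK /bK !rev_ordK.
have ha := ltn_ord a; have hb := ltn_ord b.
case: (ltngtP (nat_of_ord a).*2.+1 N) => [h1|h1|h1].
2,3: idtac.
all: try (have ra : rev_ord a = a by apply: val_inj => /=; lia); try rewrite ra.
all: case: (ltngtP (nat_of_ord b).*2.+1 N) => [h2|h2|h2].
all: try (have rb : rev_ord b = b by apply: val_inj => /=; lia); try rewrite rb.
all: case: (ltngtP a b) => [h3|h3|h3].
all: try (have e3 : b = a by apply: val_inj; lia); try rewrite e3.
all: case: (ltngtP a (rev_ord b)) => [h4|h4|h4].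
all: try (have e4 : a = rev_ord b by apply: val_inj => /=; rewrite /= in h4; lia); try rewrite e4; rewrite ?rev_ordK.
all: rewrite /= in h1 h2 h3 h4 *; decide_nat; rewrite /=; try lia.
all: field.
all: by rewrite ?hQ ?hq.
Qed.
End Loc.

Section Gen.
Variables (k : fieldType) (B : finType).
Definition hat (al be : B -> k) (f : B -> B) (Psi : B -> k) (u : B) :=
  al u * Psi (f u) + be u * Psi u.
Definition gy (y : 'I_#|B|) (v : B) : k := (enum_val y == v)%:R.
Lemma ev_eq (z : 'I_#|B|) w : (enum_val z == w) = (z == enum_rank w).
Proof. by rewrite -(inj_eq enum_rank_inj) enum_valK. Qed.
Lemma sum_delta (c : 'I_#|B|) (g : 'I_#|B| -> k) :
  \sum_z ((z == c)%:R * g z) = g c.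
Proof.
rewrite (bigD1 c) //= eqxx mul1r big1 ?addr0 // => z /negPf ->; exact: mul0r.
Qed.
Definition opform (M : 'M[k]_#|B|) al be f := forall x y,
  M x y = al (enum_val x) * (enum_val y == f (enum_val x))%:R
          + be (enum_val x) * (enum_val y == enum_val x)%:R.
Lemma opmx_mul (M : 'M[k]_#|B|) al be f : opform M al be f ->
  forall p (C : 'M[k]_(#|B|, p)) y Psi, (forall v, C (enum_rank v) y = Psi v) ->
  forall v, (M *m C) (enum_rank v) y = hat al be f Psi v.
Proof.
move=> HM p C y Psi HC v; rewrite mxE.
rewrite (eq_bigr (fun z => al v * ((z == enum_rank (f v))%:R * C z y)
   + be v * ((z == enum_rank v)%:R * C z y))); last first.
  by move=> z _; rewrite HM enum_rankK !ev_eq; ring.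
by rewrite big_split /= -!mulr_sumr !sum_delta !HC.
Qed.
Lemma opmx_base (M : 'M[k]_#|B|) al be f : opform M al be f ->
  forall y v, M (enum_rank v) y = hat al be f (gy y) v.
Proof. by move=> HM y v; rewrite HM enum_rankK. Qed.
Lemma scal_entry a y v : (a%:M : 'M[k]_#|B|) (enum_rank v) y = a * gy y v.
Proof. by rewrite mxE -mulr_natr /gy ev_eq eq_sym. Qed.
End Gen.

Lemma split_lemma (k : fieldType) (d n1 n2 : nat) (TY : 'I_d -> 'M[k]_n1)
  (TX : 'I_d -> 'M[k]_n2) (Phi : 'M[k]_(n2, n1)) :
  completely_reducible TX -> intertwines TX TY Phi -> (1%:M <= Phi)%MS ->
  exists F : 'M[k]_(n1, n2), intertwines TY TX F /\ F *m Phi = 1%:M.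
Proof.
move=> cr itw full.
have inv : forall i, (kermx Phi *m TX i <= kermx Phi)%MS.
  move=> i; apply/sub_kermxP; rewrite -mulmxA itw mulmxA mulmx_ker mul0mx //.
have [W [Winv [capW sumW]]] := cr (kermx Phi) inv.
have sWP : (1%:M <= W *m Phi)%MS.
  apply: submx_trans full _.
  have h1 : (Phi <= (kermx Phi + W)%MS *m Phi)%MS.
    by rewrite -{1}[Phi]mul1mx submxMr.
  apply: submx_trans h1 _.
  rewrite (addsmxMr (kermx Phi) W Phi) mulmx_ker.
  by rewrite adds0mx submx_refl.
have [P FP] : exists P : 'M[k]_(n1, n2), P *m W *m Phi = 1%:M.
  by exists (pinvmx (W *m Phi)); have := mulmxKpV sWP; rewrite mul1mx mulmxA.
exists (P *m W); split; last by [].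
move=> i; apply/eqP; rewrite -subr_eq0 -submx0.
set D := _ - _.
have DU : (D <= kermx Phi)%MS.
  apply/sub_kermxP.
  have e1 : TY i *m (P *m W) *m Phi = TY i by rewrite -mulmxA FP mulmx1.
  have e2 : P *m W *m TX i *m Phi = TY i.
    by rewrite -mulmxA itw mulmxA FP mul1mx.
  by rewrite /D mulmxBl e1 e2 subrr.
have DW : (D <= W)%MS.
  rewrite /D addmx_sub //; first by rewrite mulmxA submxMl.
  rewrite -scaleN1r scalemx_sub // -mulmxA; apply: submx_trans (submxMl _ _) (Winv i).
apply: submx_trans capW; by rewrite sub_capmx DU DW.
Qed.

Section DS.
Variables (k : fieldType) (n m : nat).
Definition Dg (A : 'M[k]_n) : 'M[k]_(\sum_(j < m) n) := \mxdiag_(j < m) A.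
Lemma DgM A B : Dg A *m Dg B = Dg (A *m B).
Proof.
rewrite /Dg [X in _ *m X]/mxdiag mul_mxdiag_mxblock /mxdiag.
apply: eq_mxblock => i j; case: eqP => _; rewrite ?conform_mx_id ?mulmx0 //.
Qed.
Lemma DgD A B : Dg (A + B) = Dg A + Dg B.
Proof. exact: mxdiagD. Qed.
Lemma DgB A B : Dg (A - B) = Dg A - Dg B.
Proof. exact: mxdiagB. Qed.
Lemma DgZ a : Dg a%:M = a%:M.
Proof. exact: mxdiagZ. Qed.
Lemma Dg0 : Dg 0 = 0.
Proof. exact: mxdiag0. Qed.
End DS.

Lemma dsum_rep (k : fieldType) (Q q : k) d n m (T : 'I_d -> 'M[k]_n) :
  is_HB_rep Q q T -> is_HB_rep Q q (rep_dsum m T).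
Proof.
have -> : rep_dsum m T = fun i => Dg m (T i) by [].
case=> h1 h2 h3 h4 h5; split.
- move=> i /h1 e; rewrite -(DgZ n m) -(DgZ n m) -DgD -DgB DgM e; exact: Dg0.
- move=> i /h2 e; rewrite -(DgZ n m) -(DgZ n m) -DgD -DgB DgM e; exact: Dg0.
- move=> i j a b; rewrite !(DgM m) (h3 i j a b) //.
- move=> i j a b; rewrite !(DgM m) (h4 i j a b) //.
- move=> i j a; rewrite !(DgM m) (h5 i j a) //.
Qed.

Section Rel.
Variables (k : fieldType) (d N : nat) (Q q : k).
Hypotheses (hQ : Q != 0) (hq : q != 0).
Local Notation B := (tbasis d N).

Definition al (i : 'I_d) (u : B) : k :=
  if val i == 0%N then aK k (u i) else aR k (u (prev_ord i)) (u i).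
Definition be (i : 'I_d) (u : B) : k :=
  if val i == 0%N then bK Q (u i) else bR q (u (prev_ord i)) (u i).
Definition ff (i : 'I_d) (u : B) : B :=
  if val i == 0%N then set_first i (rev_ord (u i)) u else swap_at i u.

Lemma T_opform i : opform (T_mx N Q q i) (al i) (be i) (ff i).
Proof.
move=> x y; rewrite mxE /T_coef /al /be /ff.
set u := enum_val x; set w := enum_val y.
case: eqP => hi.
- rewrite /K_coef /aK /bK /=. case: eqP => h.
  + have -> : set_first i (rev_ord (u i)) u = u.
      apply/ffunP => p; rewrite ffunE; case: eqP => [->|//].
      by apply: val_inj => /=; lia.
    by case: (w == u); rewrite /=; ring.
  + case: ifP => h2; by case: (w == u); case: (w == _); rewrite /=; ring.
- rewrite /R_coef /aR /bR /=.
  rewrite (_ : (u (prev_ord i) == u i) = (nat_of_ord (u (prev_ord i)) == nat_of_ord (u i))) //.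
  case: eqP => h.
  + have -> : swap_at i u = u.
      have h' := val_inj h.
      apply/ffunP => p; rewrite ffunE; case: eqP => [->|_]; first by rewrite h'.
      by case: eqP => [->|//].
    by case: (w == u); rewrite /=; ring.
  + case: ifP => h2; by case: (w == u); case: (w == _); rewrite /=; ring.
Qed.

Definition set2 (p1 p2 : 'I_d) (u : B) (x y : 'I_N) : B :=
  [ffun p => if p == p1 then x else if p == p2 then y else u p].
Definition set3 (p1 p2 p3 : 'I_d) (u : B) (x y z : 'I_N) : B :=
  [ffun p => if p == p1 then x else if p == p2 then y else if p == p3 then z else u p].

Lemma set2id p1 p2 u : set2 p1 p2 u (u p1) (u p2) = u.
Proof. by apply/ffunP => p; rewrite ffunE; do 2 (case: eqP => [->//|_]). Qed.
Lemma set3id p1 p2 p3 u : set3 p1 p2 p3 u (u p1) (u p2) (u p3) = u.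
Proof. by apply/ffunP => p; rewrite ffunE; do 3 (case: eqP => [->//|_]). Qed.

Lemma prev0 (i : 'I_d) : val i = 0%N -> prev_ord i = i.
Proof. by move=> h; apply: val_inj => /=; rewrite h. Qed.
Lemma prevS (i j : 'I_d) : val j = (val i).+1 -> prev_ord j = i.
Proof. by move=> h; apply: val_inj => /=; rewrite h. Qed.
Lemma prev_neq (i : 'I_d) : (0 < val i)%N -> (prev_ord i == i) = false.
Proof. move=> h; apply/eqP => /(congr1 val) /= e; change (val i) with (nat_of_ord i) in h; lia. Qed.

Lemma neq_ord (a b : 'I_d) : val a <> val b -> (a == b) = false.
Proof. by move=> h; apply/eqP => e; apply: h; rewrite e. Qed.

Lemma trR2 (i : 'I_d) (hi : (0 < val i)%N) u (Psi : B -> k) (F : 'I_N -> 'I_N -> k) :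
  (forall x y, Psi (set2 (prev_ord i) i u x y) = F x y) ->
  forall x y, hat (al i) (be i) (ff i) Psi (set2 (prev_ord i) i u x y) = R2 q F x y.
Proof.
move=> H x y; rewrite /hat /al /be /ff /R2.
have i0 : (val i == 0%N) = false by apply/eqP; lia.
have np := prev_neq hi.
rewrite i0 !ffunE eqxx (eq_sym i) np eqxx.
have -> : swap_at i (set2 (prev_ord i) i u x y) = set2 (prev_ord i) i u y x.
  apply/ffunP => p; rewrite !ffunE eqxx (eq_sym i) np eqxx.
  by case: (p == prev_ord i) => //; case: (p == i).
by rewrite !H.
Qed.

Lemma trK1 (i : 'I_d) (hi : val i = 0%N) u (Psi : B -> k) (F : 'I_N -> k) :
  (forall x, Psi (set_first i x u) = F x) ->
  forall x, hat (al i) (be i) (ff i) Psi (set_first i x u) = aK k x * F (rev_ord x) + bK Q x * F x.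
Proof.
move=> H x; rewrite /hat /al /be /ff hi eqxx /= !ffunE eqxx.
have -> : set_first i (rev_ord x) (set_first i x u) = set_first i (rev_ord x) u.
  by apply/ffunP => p; rewrite !ffunE; case: eqP.
by rewrite !H.
Qed.

Section Braid.
Variables (i j : 'I_d) (hi : (0 < val i)%N) (hj : val j = (val i).+1).
Let n12 : (prev_ord i == i) = false. Proof. exact: prev_neq. Qed.
Let n21 : (i == prev_ord i) = false. Proof. by rewrite eq_sym n12. Qed.
Let n13 : (prev_ord i == j) = false.
Proof. apply: neq_ord => /=; move: hi hj; change (val i) with (nat_of_ord i); change (val j) with (nat_of_ord j); lia. Qed.
Let n31 : (j == prev_ord i) = false. Proof. by rewrite eq_sym n13. Qed.
Let n23 : (i == j) = false.
Proof. apply: neq_ord => /=; move: hi hj; change (val i) with (nat_of_ord i); change (val j) with (nat_of_ord j); lia. Qed.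
Let n32 : (j == i) = false. Proof. by rewrite eq_sym n23. Qed.
Let pj : prev_ord j = i. Proof. exact: prevS. Qed.
Let i0 : (val i == 0%N) = false. Proof. by apply/eqP; move: hi; change (val i) with (nat_of_ord i); lia. Qed.
Let j0 : (val j == 0%N) = false. Proof. by apply/eqP; rewrite hj. Qed.

Lemma trB1 u (Psi : B -> k) (F : 'I_N -> 'I_N -> 'I_N -> k) :
  (forall x y z, Psi (set3 (prev_ord i) i j u x y z) = F x y z) ->
  forall x y z, hat (al i) (be i) (ff i) Psi (set3 (prev_ord i) i j u x y z) = R12 q F x y z.
Proof.
move=> H x y z; rewrite /hat /al /be /ff /R12 i0 !ffunE eqxx n21 eqxx.
have -> : swap_at i (set3 (prev_ord i) i j u x y z) = set3 (prev_ord i) i j u y x z.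
  apply/ffunP => p; rewrite !ffunE eqxx n21 eqxx.
  by case: (p == prev_ord i) => //; case: (p == i).
by rewrite !H.
Qed.

Lemma trB2 u (Psi : B -> k) (F : 'I_N -> 'I_N -> 'I_N -> k) :
  (forall x y z, Psi (set3 (prev_ord i) i j u x y z) = F x y z) ->
  forall x y z, hat (al j) (be j) (ff j) Psi (set3 (prev_ord i) i j u x y z) = R23 q F x y z.
Proof.
move=> H x y z; rewrite /hat /al /be /ff /R23 j0 pj !ffunE eqxx n21 n31 n32 eqxx.
have -> : swap_at j (set3 (prev_ord i) i j u x y z) = set3 (prev_ord i) i j u x z y.
  apply/ffunP => p; rewrite !ffunE pj eqxx n21 n31 n32 eqxx.
  case: (eqVneq p i) => [->|_]; first by rewrite ?n21 ?n23 ?eqxx.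
  case: (eqVneq p j) => [->|_]; first by rewrite ?n31 ?n32 ?eqxx.
  by case: (p == prev_ord i).
by rewrite !H.
Qed.
End Braid.

Section TypeB.
Variables (i j : 'I_d) (hi : val i = 0%N) (hj : val j = 1%N).
Let n12 : (i == j) = false. Proof. by apply: neq_ord; rewrite hi hj. Qed.
Let n21 : (j == i) = false. Proof. by rewrite eq_sym n12. Qed.
Let pj : prev_ord j = i. Proof. by apply: prevS; rewrite hi hj. Qed.
Let i0 : (val i == 0%N) = true. Proof. by apply/eqP. Qed.
Let j0 : (val j == 0%N) = false. Proof. by rewrite hj. Qed.

Lemma trT1 u (Psi : B -> k) (F : 'I_N -> 'I_N -> k) :
  (forall x y, Psi (set2 i j u x y) = F x y) ->
  forall x y, hat (al i) (be i) (ff i) Psi (set2 i j u x y) = K1 Q F x y.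
Proof.
move=> H x y; rewrite /hat /al /be /ff /K1 i0 !ffunE eqxx.
have -> : set_first i (rev_ord x) (set2 i j u x y) = set2 i j u (rev_ord x) y.
  apply/ffunP => p; rewrite !ffunE.
  by case: (p == i).
by rewrite !H.
Qed.

Lemma trT2 u (Psi : B -> k) (F : 'I_N -> 'I_N -> k) :
  (forall x y, Psi (set2 i j u x y) = F x y) ->
  forall x y, hat (al j) (be j) (ff j) Psi (set2 i j u x y) = R2 q F x y.
Proof.
move=> H x y; rewrite /hat /al /be /ff /R2 j0 pj !ffunE eqxx n21 eqxx.
have -> : swap_at j (set2 i j u x y) = set2 i j u y x.
  apply/ffunP => p; rewrite !ffunE pj eqxx n21 eqxx.
  by case: (p == i) => //; case: (p == j).
by rewrite !H.
Qed.
End TypeB.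

Lemma sfid (i : 'I_d) (u : B) : set_first i (u i) u = u.
Proof. by apply/ffunP => p; rewrite ffunE; case: eqP => [->|]. Qed.


Lemma rel_braid (i j : 'I_d) : (0 < val i)%N -> val j = (val i).+1 ->
  T_mx N Q q i *m T_mx N Q q j *m T_mx N Q q i =
  T_mx N Q q j *m T_mx N Q q i *m T_mx N Q q j.
Proof.
move=> hi hj; apply/matrixP => x y; rewrite -(enum_valK x); move: (enum_val x) => v; rewrite -!mulmxA.
rewrite (opmx_mul (T_opform i) (opmx_mul (T_opform j) (opmx_base (T_opform i) y))).
rewrite (opmx_mul (T_opform j) (opmx_mul (T_opform i) (opmx_base (T_opform j) y))).
have H0 : forall a b c, @gy k _ y (set3 (prev_ord i) i j v a b c) =
   (fun a b c => @gy k _ y (set3 (prev_ord i) i j v a b c)) a b c by [].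
have L := trB1 hi hj (trB2 hi hj (trB1 hi hj H0)).
have R := trB2 hi hj (trB1 hi hj (trB2 hi hj H0)).
by rewrite -(set3id (prev_ord i) i j v) L R; exact: (braid_loc hQ hq).
Qed.

Lemma rel_typeB (i j : 'I_d) : val i = 0%N -> val j = 1%N ->
  T_mx N Q q i *m T_mx N Q q j *m T_mx N Q q i *m T_mx N Q q j =
  T_mx N Q q j *m T_mx N Q q i *m T_mx N Q q j *m T_mx N Q q i.
Proof.
move=> hi hj; apply/matrixP => x y; rewrite -(enum_valK x); move: (enum_val x) => v; rewrite -!mulmxA.
rewrite (opmx_mul (T_opform i) (opmx_mul (T_opform j) (opmx_mul (T_opform i) (opmx_base (T_opform j) y)))).
rewrite (opmx_mul (T_opform j) (opmx_mul (T_opform i) (opmx_mul (T_opform j) (opmx_base (T_opform i) y)))).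
have H0 : forall a b, @gy k _ y (set2 i j v a b) =
   (fun a b => @gy k _ y (set2 i j v a b)) a b by [].
have L := trT1 hi (trT2 hi hj (trT1 hi (trT2 hi hj H0))).
have R := trT2 hi hj (trT1 hi (trT2 hi hj (trT1 hi H0))).
by rewrite -(set2id i j v) L R; exact: (typeB_loc hQ hq).
Qed.

Lemma rel_quadR (i : 'I_d) : (0 < val i)%N ->
  (T_mx N Q q i + q%:M) *m (T_mx N Q q i - q^-1%:M) = 0.
Proof.
move=> hi; rewrite mulmxDl !mulmxBr mul_mx_scalar mul_scalar_mx -scalar_mxM.
apply/matrixP => x y; rewrite -(enum_valK x); move: (enum_val x) => v.
have E2 := opmx_mul (T_opform i) (opmx_base (T_opform i) y) v.
have E1 := opmx_base (T_opform i) y v.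
have E0 := @scal_entry k B (q * q^-1) y v.
move: E2 E1 E0; move: (T_mx N Q q i *m T_mx N Q q i) => P; move: (T_mx N Q q i) => T1.
move: ((q * q^-1)%:M : 'M[k]_(tdim d N)) => S; move=> E2 E1 E0.
rewrite !mxE E2 E1 E0.
have H0 : forall a b, @gy k _ y (set2 (prev_ord i) i v a b) =
   (fun a b => @gy k _ y (set2 (prev_ord i) i v a b)) a b by [].
have L1 := trR2 hi H0.
have L2 := trR2 hi (trR2 hi H0).
rewrite -(set2id (prev_ord i) i v) L2 L1 /R2 /aR /bR /=.
move: (v (prev_ord i)) (v i) => a b.
case: (ltngtP a b) => [h1|h1|/val_inj h1]; try subst b; decide_nat; rewrite /=; field.
all: exact hq.
Qed.

Lemma rel_quadK (i : 'I_d) : val i = 0%N ->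
  (T_mx N Q q i + Q%:M) *m (T_mx N Q q i - Q^-1%:M) = 0.
Proof.
move=> hi; rewrite mulmxDl !mulmxBr mul_mx_scalar mul_scalar_mx -scalar_mxM.
apply/matrixP => x y; rewrite -(enum_valK x); move: (enum_val x) => v.
have E2 := opmx_mul (T_opform i) (opmx_base (T_opform i) y) v.
have E1 := opmx_base (T_opform i) y v.
have E0 := @scal_entry k B (Q * Q^-1) y v.
move: E2 E1 E0; move: (T_mx N Q q i *m T_mx N Q q i) => P; move: (T_mx N Q q i) => T1.
move: ((Q * Q^-1)%:M : 'M[k]_(tdim d N)) => S; move=> E2 E1 E0.
rewrite !mxE E2 E1 E0.
have H0 : forall a, @gy k _ y (set_first i a v) =
   (fun a => @gy k _ y (set_first i a v)) a by [].
have L1 := trK1 hi H0.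
have L2 := trK1 hi (trK1 hi H0).
rewrite -(sfid i v) L2 L1 /aK /bK /= rev_ordK.
move: (v i) => a; have ha := ltn_ord a.
case: (ltngtP (nat_of_ord a).*2.+1 N) => h1.
3: (have ra : rev_ord a = a by apply: val_inj => /=; lia); rewrite ra.
all: decide_nat; rewrite /=; field.
all: exact hQ.
Qed.

Lemma ff_out (i : 'I_d) (u : B) p : p != prev_ord i -> p != i -> ff i u p = u p.
Proof.
move=> h1 h2; rewrite /ff; case: eqP => _; rewrite /set_first /swap_at ffunE.
  by rewrite (negPf h2).
by rewrite (negPf h1) (negPf h2).
Qed.

Lemma ff_congr (i : 'I_d) (u w : B) p : u (prev_ord i) = w (prev_ord i) -> u i = w i ->
  (p == prev_ord i) || (p == i) -> ff i u p = ff i w p.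
Proof.
move=> e1 e2 hp; rewrite /ff; case: eqP => hi; rewrite /set_first /swap_at !ffunE.
  by move: hp; rewrite prev0 // orbb => /eqP ->; rewrite eqxx e2.
have np : (i == prev_ord i) = false.
  by apply/eqP => /(congr1 val) /=; move: hi; change (val i) with (nat_of_ord i); lia.
by case/orP: hp => /eqP ->; rewrite ?eqxx ?np ?e1 ?e2.
Qed.

Lemma ne_val (a b : 'I_d) : nat_of_ord a <> nat_of_ord b -> a != b.
Proof. by move=> h; apply/eqP => e; apply: h; rewrite e. Qed.

Lemma rel_far (i j : 'I_d) : ((val i).+1 < val j)%N ->
  T_mx N Q q i *m T_mx N Q q j = T_mx N Q q j *m T_mx N Q q i.
Proof.
move=> h; change (val i) with (nat_of_ord i) in h; change (val j) with (nat_of_ord j) in h.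
apply/matrixP => x y; rewrite -(enum_valK x); move: (enum_val x) => v.
rewrite (opmx_mul (T_opform i) (opmx_base (T_opform j) y)).
rewrite (opmx_mul (T_opform j) (opmx_base (T_opform i) y)).
have f1 : prev_ord j != prev_ord i by apply: ne_val => /=; lia.
have f2 : prev_ord j != i by apply: ne_val => /=; lia.
have f3 : j != prev_ord i by apply: ne_val => /=; lia.
have f4 : j != i by apply: ne_val => /=; lia.
have g1 : prev_ord i != prev_ord j by rewrite eq_sym.
have g2 : i != prev_ord j by rewrite eq_sym.
have g3 : prev_ord i != j by rewrite eq_sym.
have g4 : i != j by rewrite eq_sym.
have ea : al j (ff i v) = al j v by rewrite /al !ff_out.
have eb : be j (ff i v) = be j v by rewrite /be !ff_out.
have ec : al i (ff j v) = al i v by rewrite /al !ff_out.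
have ed : be i (ff j v) = be i v by rewrite /be !ff_out.
have ee : ff i (ff j v) = ff j (ff i v).
  apply/ffunP => p.
  have s1 : ff j v (prev_ord i) = v (prev_ord i) by rewrite ff_out.
  have s2 : ff j v i = v i by rewrite ff_out.
  have s3 : ff i v (prev_ord j) = v (prev_ord j) by rewrite ff_out.
  have s4 : ff i v j = v j by rewrite ff_out.
  case: (boolP ((p == prev_ord i) || (p == i))) => hp.
    have [h1 h2] : p != prev_ord j /\ p != j by case/orP: hp => /eqP ->.
    by rewrite (ff_congr s1 s2 hp) (ff_out _ h1 h2).
  case: (boolP ((p == prev_ord j) || (p == j))) => hp'.
    have [h1 h2] : p != prev_ord i /\ p != i by move/norP: hp => [].
    by rewrite (ff_congr s3 s4 hp') (ff_out _ h1 h2).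
  move/norP: hp => [n1 n2]; move/norP: hp' => [n3 n4].
  by rewrite !ff_out.
rewrite /hat ea eb ec ed ee; ring.
Qed.

Lemma T_rep : is_HB_rep Q q (@T_mx k d N Q q).
Proof.
split.
- exact: rel_quadK.
- exact: rel_quadR.
- exact: rel_braid.
- exact: rel_typeB.
- move=> i j /orP [h|h]; first exact: rel_far.
  by rewrite (rel_far h).
Qed.
End Rel.

Section Gmap.
Variables (d e : nat).
Hypotheses (hd : (1 <= d)%N) (he : (e <= d)%N).

Definition hh (j : nat) : nat := if (e <= j)%N then j.+1 else j.
Definition gnat (a : nat) : nat :=
  if (d <= a)%N then (d + hh (a - d))%N else (d - hh (d.-1 - a))%N.
Definition inM (a : nat) : bool := (0 < e)%N && ((a == d.-1) || (a == d)).
Definition isneg (a : nat) : bool := (0 < e)%N && (a == d.-1).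

Ltac gsolve := rewrite /gnat /hh /inM /isneg; repeat (case: ifP => /=; try move/eqP); lia.

Lemma gnat_lt a : (a < 2 * d)%N -> (gnat a < (2 * d).+1)%N.
Proof. move=> ha; rewrite /gnat /hh; repeat case: ifP; lia. Qed.

Lemma gnat_rev a : (a < 2 * d)%N -> gnat (2 * d - a.+1) = (2 * d - gnat a)%N.
Proof. move=> ha; rewrite /gnat /hh; repeat case: ifP; lia. Qed.

Lemma gnat_mid a : inM a -> gnat a = d.
Proof. rewrite /inM /gnat /hh => /andP [h1 /orP [] /eqP ->]; repeat case: ifP; lia. Qed.

Lemma gnat_mono a b : (a < b)%N -> (b < 2 * d)%N -> ~~ (inM a && inM b) -> (gnat a < gnat b)%N.
Proof. rewrite /inM /gnat /hh => h1 h2 h3; repeat case: ifP; lia. Qed.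

Lemma gnat_nmid a : (a < 2 * d)%N -> ~~ inM a -> gnat a <> d.
Proof. rewrite /inM /gnat /hh => h1 h3; repeat case: ifP; lia. Qed.

Lemma gnat_pos a : (a < 2 * d)%N -> ~~ inM a -> ((d < gnat a)%N = (d <= a)%N).
Proof. rewrite /inM /gnat /hh => h1 h3; repeat case: ifP; lia. Qed.
End Gmap.

Section Comb.
Variables (d N : nat) (A Bn : 'I_N -> bool).
Local Notation B := (tbasis d N).
Definition invP (w : B) : nat :=
  (\sum_(p < d) \sum_(p' < d) ((p < p') && A (w p) && Bn (w p')))%N.
Definition negQ (w : B) : nat := (\sum_(p < d) Bn (w p))%N.

Definition tau (i p : 'I_d) : 'I_d := if p == prev_ord i then i else if p == i then prev_ord i else p.
Lemma tauK i : involutive (tau i).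
Proof.
move=> p; rewrite /tau; case: (eqVneq p (prev_ord i)) => [->|h1].
  by rewrite eqxx; case: (eqVneq i (prev_ord i)) => // ->.
case: (eqVneq p i) => [->|h2]; first by rewrite eqxx.
by rewrite (negPf h1) (negPf h2).
Qed.
Lemma swap_tau i (w : B) : swap_at i w = [ffun p => w (tau i p)].
Proof. by apply/ffunP => p; rewrite !ffunE /tau; case: (p == prev_ord i) => //; case: (p == i). Qed.

Lemma dsum2 (a b : 'I_d) (c : 'I_d -> 'I_d -> bool) :
  (\sum_(p < d) \sum_(p' < d) ((p == a) && (p' == b) && c p p'))%N = c a b.
Proof.
rewrite (bigD1 a) //=.
rewrite [X in (_ + X)%N]big1; last first.
  by move=> p /negPf hp; rewrite big1 // => p' _; rewrite hp.
rewrite addn0 (bigD1 b) //= eqxx eqxx /=.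
rewrite [X in (_ + X)%N]big1 ?addn0 //.
by move=> p' /negPf hp; rewrite hp.
Qed.

Lemma inv_swap (i : 'I_d) (hi : (0 < val i)%N) (w : B) :
  (invP (swap_at i w) + (A (w (prev_ord i)) && Bn (w i)) =
   invP w + (A (w i) && Bn (w (prev_ord i))))%N.
Proof.
rewrite swap_tau /invP.
under eq_bigr do under eq_bigr do rewrite !ffunE.
rewrite (reindex_inj (can_inj (tauK i))) /=.
under eq_bigr do rewrite (reindex_inj (can_inj (tauK i))) /=.
under eq_bigr do under eq_bigr do rewrite !tauK.
rewrite -(@dsum2 (prev_ord i) i (fun p p' => A (w p) && Bn (w p'))) -(@dsum2 i (prev_ord i) (fun p p' => A (w p) && Bn (w p'))).
rewrite -!big_split /=; apply: eq_bigr => p _; rewrite -!big_split /=; apply: eq_bigr => p' _.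
case: (A (w p)); case: (Bn (w p')); rewrite ?andbF ?andbT //.
move: hi; change (val i) with (nat_of_ord i) => hi.
rewrite /tau; change (p == prev_ord i) with (nat_of_ord p == (nat_of_ord i).-1);
change (p' == prev_ord i) with (nat_of_ord p' == (nat_of_ord i).-1);
change (p == i) with (nat_of_ord p == nat_of_ord i);
change (p' == i) with (nat_of_ord p' == nat_of_ord i).
have vp : nat_of_ord (prev_ord i) = (nat_of_ord i).-1 by [].
by repeat case: ifP; lia.
Qed.

Lemma neg_swap (i : 'I_d) (w : B) : negQ (swap_at i w) = negQ w.
Proof.
rewrite swap_tau /negQ.
under eq_bigr do rewrite ffunE.
by rewrite [RHS](reindex_inj (can_inj (tauK i))).
Qed.

Lemma inv_sf (i0 : 'I_d) (h0 : val i0 = 0%N) (z : 'I_N) (w : B) :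
  A z = A (w i0) -> invP (set_first i0 z w) = invP w.
Proof.
move=> hz; rewrite /invP; apply: eq_bigr => p _; apply: eq_bigr => p' _.
rewrite !ffunE.
case: (eqVneq p' i0) => [->|hp'].
  have -> : (p < i0)%N = false by apply/negbTE; rewrite -leqNgt; move: h0; change (val i0) with (nat_of_ord i0) => ->.
  by [].
case: (eqVneq p i0) => [->|hp] //.
by rewrite hz.
Qed.

Lemma neg_sf (i0 : 'I_d) (z : 'I_N) (w : B) :
  (negQ (set_first i0 z w) + Bn (w i0) = negQ w + Bn z)%N.
Proof.
rewrite /negQ (bigD1 i0) //= [in RHS](bigD1 i0) //= !ffunE eqxx.
have -> : (\sum_(i < d | i != i0) Bn (set_first i0 z w i) = \sum_(i < d | i != i0) Bn (w i))%N.
  by apply: eq_bigr => p hp; rewrite ffunE (negPf hp).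
by rewrite addnAC [RHS]addnAC (addnC (Bn z)).
Qed.
End Comb.

Section HomS.
Variables (k : fieldType) (d : nat) (Q q : k) (e : nat).
Hypotheses (hQ : Q != 0) (hq : q != 0) (hd : (1 <= d)%N) (he : (e <= d)%N).
Local Notation N1 := (2 * d)%N.
Local Notation N2 := (2 * d).+1.

Definition gg (a : 'I_N1) : 'I_N2 := inord (gnat d e a).
Lemma ggE a : nat_of_ord (gg a) = gnat d e a.
Proof. by rewrite /gg inordK //; apply: gnat_lt. Qed.
Lemma gg_rev a : gg (rev_ord a) = rev_ord (gg a).
Proof.
by apply: val_inj; rewrite /= !ggE gnat_rev // subSS.

Qed.

Definition Gm (w : tbasis d N1) : tbasis d N2 := [ffun p => gg (w p)].
Lemma G_ff i w : Gm (ff i w) = ff i (Gm w).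
Proof.
apply/ffunP => p; rewrite /ff; case: eqP => _; rewrite /set_first /swap_at !ffunE.
  by case: (p == i) => //; rewrite gg_rev.
by case: (p == prev_ord i) => //; case: (p == i).
Qed.

Definition isnX (a : 'I_N1) : bool := isneg d e a.
Definition inMX (a : 'I_N1) : bool := inM d e a.
Definition ccM (w : tbasis d N1) : k :=
  Q^-1 ^+ negQ isnX w * q^-1 ^+ invP inMX isnX w.

Lemma cc_K (i : 'I_d) (hi : val i = 0%N) (w : tbasis d N1) :
  inMX (rev_ord (w i)) = inMX (w i) ->
  ccM (set_first i (rev_ord (w i)) w) * Q^-1 ^+ isnX (w i) =
  ccM w * Q^-1 ^+ isnX (rev_ord (w i)).
Proof.
move=> hM; rewrite /ccM (inv_sf _ hi hM) mulrAC -exprD neg_sf exprD; ring.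
Qed.

Lemma cc_R (i : 'I_d) (hi : (0 < val i)%N) (w : tbasis d N1) :
  ccM (swap_at i w) * q^-1 ^+ (inMX (w (prev_ord i)) && isnX (w i)) =
  ccM w * q^-1 ^+ (inMX (w i) && isnX (w (prev_ord i))).
Proof.
rewrite /ccM neg_swap -mulrA -exprD (inv_swap inMX isnX hi) exprD; ring.
Qed.

Definition phi : 'M[k]_(tdim d N1, tdim d N2) :=
  \matrix_(x, y) (ccM (enum_val x) * (enum_val y == Gm (enum_val x))%:R).

Lemma phi_itw i : T_mx N1 Q q i *m phi = phi *m T_mx N2 Q q i.
Proof.
apply/matrixP => x y; rewrite -(enum_valK x); move: (enum_val x) => w.
have HC : forall v, phi (enum_rank v) y = ccM v * (enum_val y == Gm v)%:R.
  by move=> v; rewrite mxE enum_rankK.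
rewrite (opmx_mul (T_opform hQ hq i) HC).
have -> : (phi *m T_mx N2 Q q i) (enum_rank w) y = ccM w * T_mx N2 Q q i (enum_rank (Gm w)) y.
  rewrite mxE (eq_bigr (fun z => ccM w * ((z == enum_rank (Gm w))%:R * T_mx N2 Q q i z y))); last first.
    by move=> z _; rewrite mxE enum_rankK ev_eq mulrA.
  by rewrite -mulr_sumr sum_delta.
rewrite (opmx_base (T_opform hQ hq i)) /hat G_ff /gy.
move: (enum_val y) => v.
have GmE : forall (u : tbasis d N1) p, Gm u p = gg (u p) by move=> u p; rewrite ffunE.
rewrite /al /be !GmE; case: (eqVneq (val i) 0%N) => hi.
-
  have Hx := ltn_ord (w i).
  have ffw : ff i w = set_first i (rev_ord (w i)) w by rewrite /ff hi eqxx.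
  have hrev : inMX (rev_ord (w i)) = inMX (w i).
    rewrite /inMX /inM /=; set a := nat_of_ord (w i) in Hx *; apply/idP/idP; lia.
  have H := cc_K hi hrev.
  rewrite ffw in H *.
  case: (boolP (inMX (w i))) => hM.
  + have gm : gnat d e (w i) = d by apply: gnat_mid.
    have fG : ff i (Gm w) = Gm w.
      rewrite /ff hi eqxx; apply/ffunP => p; rewrite !ffunE.
      case: eqP => [->|] //; apply: val_inj => /=; rewrite ggE gm; lia.
    rewrite fG /aK /bK ggE gm.
    move: hM H; rewrite /inMX /inM /isnX /isneg /=.
    set a := nat_of_ord (w i) in Hx *.
    move=> /andP [he0 /orP [/eqP h|/eqP h]] H; rewrite h in H *; move: H; decide_nat;
      rewrite /= ?expr0 ?expr1 ?mulr1 => H.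
    * rewrite -H; field; by rewrite hQ.
    * rewrite H; field; by rewrite hQ.
  + have hn1 : isnX (w i) = false by move: hM; rewrite /isnX /inMX /isneg /inM; lia.
    have hn2 : isnX (rev_ord (w i)) = false by move: hM; rewrite -hrev /isnX /inMX /isneg /inM; lia.
    rewrite hn1 hn2 !expr0 !mulr1 in H; rewrite H.
    have g1 := gnat_nmid hd he Hx hM.
    have g2 := gnat_pos hd he Hx hM.
    rewrite /aK /bK ggE.
    move: g1 g2 Hx; set a := nat_of_ord (w i); set b := gnat d e a => g1 g2 Hx.
    case: (leqP d a) => h; [rewrite h in g2 | rewrite (leqNgt d a) h /= in g2];
      move/idP: g2 => g2 || move/negbT: g2 => g2; decide_nat; rewrite /=; ring.
-
  have hi' : (0 < val i)%N by move: hi; change (val i) with (nat_of_ord i); lia.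
  have ffw : forall u : tbasis d _, ff i u = swap_at i u by move=> N u; rewrite /ff (negPf hi).
  rewrite !ffw.
  have H := cc_R hi' w.
  have Hx := ltn_ord (w (prev_ord i)); have Hy := ltn_ord (w i).
  case: (boolP (inMX (w (prev_ord i)) && inMX (w i))) => hM.
  + have /andP [hM1 hM2] := hM.
    have gm1 : gnat d e (w (prev_ord i)) = d by apply: gnat_mid.
    have gm2 : gnat d e (w i) = d by apply: gnat_mid.
    have fG : swap_at i (Gm w) = Gm w.
      have ee : gg (w (prev_ord i)) = gg (w i) by apply: val_inj; rewrite /= !ggE gm1 gm2.
      apply/ffunP => p; rewrite !ffunE.
      case: eqP => [->|_]; first by rewrite ee.
      by case: eqP => [->|_] //; rewrite ee.
    rewrite fG /aR /bR !ggE gm1 gm2 eqxx /=.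
    move: hM1 hM2 H; rewrite /inMX /inM /isnX /isneg /=.
    set a1 := nat_of_ord (w (prev_ord i)); set a2 := nat_of_ord (w i).
    move=> /andP [he0 /orP [/eqP h1|/eqP h1]] /andP [_ /orP [/eqP h2|/eqP h2]] H; rewrite h1 h2 in H *;
      move: H; decide_nat; rewrite ?expr0 ?expr1 ?mulr1 /= => H.
    * have -> : swap_at i w = w.
        apply/ffunP => p; rewrite !ffunE; case: eqP => [->|_]; first by apply: val_inj; exact: (etrans h2 (esym h1)).
        by case: eqP => [->|//]; apply: val_inj; exact: (etrans h1 (esym h2)).
      field; by rewrite hq.
    * rewrite H; field; by rewrite hq.
    * rewrite -H; field; by rewrite hq.
    * have -> : swap_at i w = w.
        apply/ffunP => p; rewrite !ffunE; case: eqP => [->|_]; first by apply: val_inj; exact: (etrans h2 (esym h1)).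
        by case: eqP => [->|//]; apply: val_inj; exact: (etrans h1 (esym h2)).
      field; by rewrite hq.
  + have hn1 : (inMX (w (prev_ord i)) && isnX (w i)) = false.
      by move: hM; rewrite /isnX /inMX /isneg /inM; lia.
    have hn2 : (inMX (w i) && isnX (w (prev_ord i))) = false.
      by move: hM; rewrite /isnX /inMX /isneg /inM; lia.
    rewrite hn1 hn2 !expr0 !mulr1 in H; rewrite H.
    have hM' : ~~ (inM d e (w i) && inM d e (w (prev_ord i))) by rewrite andbC.
    rewrite /aR /bR !ggE.
    set a1 := nat_of_ord (w (prev_ord i)) in Hx hM' *; set a2 := nat_of_ord (w i) in Hy hM' *.
    case: (ltngtP a1 a2) => h.
    * have := gnat_mono hd he h Hy hM => h'; decide_nat; rewrite /=; ring.
    * have := gnat_mono hd he h Hx hM' => h'; decide_nat; rewrite /=; ring.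
    * have ea : a1 = a2 := h; rewrite ea; decide_nat; rewrite /=; ring.
Qed.
End HomS.

Definition absv (d b : nat) : nat := if (d <= b)%N then (b - d)%N else (d - b)%N.
Definition ginvn (d e b : nat) : nat :=
  let a := absv d b in let j := if (a < e)%N then a else a.-1 in
  if (d <= b)%N then (d + j)%N else (d.-1 - j)%N.

Lemma ginv_ok d e b : (1 <= d)%N -> (e <= d)%N -> (b < (2 * d).+1)%N -> absv d b <> e ->
  (ginvn d e b < 2 * d)%N /\ gnat d e (ginvn d e b) = b.
Proof.
move=> hd he hb hne; rewrite /ginvn /gnat /hh; move: hne; rewrite /absv.
by repeat case: ifP; lia.
Qed.

Lemma pigeon d (u : 'I_d -> 'I_(2 * d).+1) :
  exists e : 'I_d.+1, forall p, absv d (u p) <> e.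
Proof.
set S := [set (inord (absv d (u p)) : 'I_d.+1) | p : 'I_d].
have : ~~ ([set: 'I_d.+1] \subset S).
  apply/negP => /subset_leq_card; rewrite cardsT card_ord => h.
  have := leq_trans h (leq_imset_card _ _); rewrite ?cardsT card_ord; lia.
case/subsetPn => e _ he; exists e => p hp; apply: (negP he).
have hb := ltn_ord (u p).
have ha : (absv d (u p) < d.+1)%N by rewrite /absv; case: ifP; lia.
by apply/imsetP; exists p => //; apply: val_inj => /=; rewrite inordK // hp.
Qed.

Section Final.
Variables (k : fieldType) (d : nat) (Q q : k).
Hypotheses (hQ : Q != 0) (hq : q != 0) (hd : (1 <= d)%N).

Lemma ccM_neq0 e (w : tbasis d (2 * d)) : ccM Q q e w != 0.
Proof. by rewrite /ccM mulf_neq0 // expf_neq0 // invr_neq0. Qed.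

Lemma phi_row e (w : tbasis d (2 * d)) :
  row (enum_rank w) (phi d Q q e) = ccM Q q e w *: delta_mx 0 (enum_rank (Gm e w)).
Proof. by apply/rowP => j; rewrite !mxE enum_rankK ev_eq. Qed.

Lemma full_rank : (1%:M <= \mxcol_(e < d.+1) phi d Q q e)%MS.
Proof.
apply/row_subP => r.
set u := enum_val r.
have [e he] := pigeon (fun p => u p).
have hed : (e <= d)%N by rewrite -ltnS.
set w : tbasis d (2 * d) := [ffun p => Ordinal (ginv_ok hd hed (ltn_ord (u p)) (he p)).1].
have Gw : Gm e w = u.
  apply/ffunP => p; rewrite !ffunE; apply: val_inj.
  have [h1 h2] := ginv_ok hd hed (ltn_ord (u p)) (he p).
  by rewrite /= ggE.
have hd0 : (row r 1%:M <= phi d Q q e)%MS.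
  have -> : row r 1%:M = (ccM Q q e w)^-1 *: row (enum_rank w) (phi d Q q e).
    by rewrite row1 phi_row Gw /u enum_valK scalerA mulVf ?scale1r // ccM_neq0.
  by apply: scalemx_sub; apply: row_sub.
apply: submx_trans hd0 _.
have -> : phi d Q q e = (\mxrow_(j < d.+1) (if j == e then 1%:M else 0 : 'M[k]_(tdim d (2 * d))))
    *m \mxcol_(j < d.+1) phi d Q q j.
  rewrite mul_mxrow_mxcol (bigD1 e) //= eqxx mul1mx big1 ?addr0 // => j /negPf ->.
  by rewrite mul0mx.
exact: submxMl.
Qed.
End Final.

Unset Implicit Arguments.
Theorem lemma3p13 (k : fieldType) (Q q : k) (d : nat) :
  Q != 0 -> q != 0 -> (1 <= d)%N ->
  HB_semisimple Q q d ->
  exists (m : nat) (F : 'M[k]_(tdim d (2 * d).+1, \sum_(j < m) tdim d (2 * d)))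
         (G : 'M[k]_(\sum_(j < m) tdim d (2 * d), tdim d (2 * d).+1)),
    [/\ intertwines (T_mx (2 * d).+1 Q q) (rep_dsum m (T_mx (2 * d) Q q)) F,
        intertwines (rep_dsum m (T_mx (2 * d) Q q)) (T_mx (2 * d).+1 Q q) G &
        F *m G = 1%:M].
Proof.
move=> hQ hq hd hss.
have cr : completely_reducible (rep_dsum d.+1 (@T_mx k d (2 * d) Q q)).
  exact: (hss _ _ (dsum_rep d.+1 (T_rep d (2 * d) hQ hq))).
have itw : intertwines (rep_dsum d.+1 (@T_mx k d (2 * d) Q q)) (@T_mx k d (2 * d).+1 Q q)
    (\mxcol_(e < d.+1) phi d Q q e).
  move=> i; rewrite /rep_dsum mul_mxdiag_mxcol mxcol_mul; apply: eq_mxcol => e.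
  by apply: phi_itw => //; rewrite -ltnS.
have [F [hF FG]] := split_lemma cr itw (full_rank hQ hq hd).
by exists d.+1, F, (\mxcol_(e < d.+1) phi d Q q e); split.
Qed.
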